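(* Let $G$ be a graph and $uv\in E(G)$. Then $d(G)\le d(G-uv)$, with equality if and only if $N_G[u]=N_G[v]$.
   Context: All graphs are finite, simple and undirected. A subset $D\subseteq V(G)$ is a dissociation set of $G$ if the induced subgraph $G[D]$ has maximum degree at most $1$; the empty set is a dissociation set. $d(G)$ denotes the total number of dissociation sets of $G$, including the empty set. $G-uv$ is the graph obtained from $G$ by deleting the edge $uv$ while keeping all vertices. $N_G[x]$ denotes the closed neighborhood of $x$ in $G$. *)

(* Defs.v *)
From mathcomp Require Import all_boot.
Set Implicit Arguments. Unset Strict Implicit. Unset Printing Implicit Defensive.

Definition simple_graph (T : finType) (e : rel T) : Prop :=
  symmetric e /\ irreflexive e.

Definition dissociation (T : finType) (e : rel T) (D : {set T}) : bool :=
  [forall x in D, #|[set y in D | e x y]| <= 1].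

Definition dcount (T : finType) (e : rel T) : nat :=
  #|[set D : {set T} | dissociation e D]|.

Definition del_edge (T : finType) (e : rel T) (u v : T) : rel T :=
  fun x y => e x y && ~~ (((x == u) && (y == v)) || ((x == v) && (y == u))).

Definition cnbhd (T : finType) (e : rel T) (x : T) : {set T} :=
  [set y | (y == x) || e x y].

(* Main.v *)
Require Import Defs.
From mathcomp Require Import all_boot.

Lemma dissP (T : finType) (e : rel T) (D : {set T}) :
  reflect (forall x y1 y2, x \in D -> y1 \in D -> y2 \in D -> e x y1 -> e x y2 -> y1 = y2)
          (dissociation e D).
Proof.
apply: (iffP forall_inP) => [H x y1 y2 xD y1D y2D e1 e2 | H x xD].
  have /card_le1_eqP := H x xD; apply; by rewrite inE ?y1D ?y2D ?e1 ?e2.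
apply/card_le1_eqP => y1 y2; rewrite !inE => /andP[y1D e1] /andP[y2D e2].
exact: (H x).
Qed.

Theorem lemma2p5 (T : finType) (e : rel T) (u v : T) :
  simple_graph e -> e u v ->
  dcount e <= dcount (del_edge e u v) /\
  (dcount e = dcount (del_edge e u v) <-> cnbhd e u = cnbhd e v).
Proof.
move=> [esym eirr] euv.
set e' := del_edge e u v.
have uv : u != v by apply: contraTneq euv => ->; rewrite eirr.
have sub : [set D | dissociation e D] \subset [set D | dissociation e' D].
  apply/subsetP => D; rewrite !inE => /dissP H; apply/dissP => x y1 y2 xD y1D y2D.
  rewrite /e' /del_edge => /andP[e1 _] /andP[e2 _]; exact: (H x).
have := subset_leqif_card sub; rewrite /dcount => -[le eqc].
split => //.
suff : ([set D | dissociation e' D] \subset [set D | dissociation e D]) <-> cnbhd e u = cnbhd e v.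
  move=> K; apply: iff_trans K; rewrite -eqc; split => [->|/eqP //]; by rewrite eqxx.
split.
- move=> /subsetP S; apply/setP => w; rewrite !inE.
  apply/idP/idP.
  + case/orP=> [/eqP H|euw]; first by rewrite H esym euv orbT.
    case: (w =P v) => [//|/eqP wv].
    have wu : w != u by apply: contraTneq euw => ->; rewrite eirr.
    apply: contraLR isT => /norP[_ nevw].
    have : [set u; v; w] \in [set D | dissociation e D].
      apply: S; rewrite inE; apply/dissP => x y1 y2; rewrite !inE /e' /del_edge.
      move=> /orP[/orP[]|]/eqP-> /orP[/orP[]|]/eqP-> /orP[/orP[]|]/eqP->;
      rewrite ?eqxx ?(negbTE uv) ?(negbTE wv) ?(negbTE wu) ?(eq_sym v u) ?(eq_sym w v)
        ?(negbTE uv) ?(negbTE wv) ?(eq_sym w u) ?(negbTE wu) ?eirr ?euw ?(negbTE nevw)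
        ?(esym w v) ?(negbTE nevw) ?(esym w u) ?euw ?andbF ?andFb //=.
    rewrite inE => /dissP H.
    have := H u v w; rewrite !inE !eqxx ?orbT euv euw => /(_ isT isT isT isT isT) /eqP.
    by rewrite eq_sym (negbTE wv).
  + case/orP=> [/eqP H|evw]; first by rewrite H euv orbT.
    case: (w =P u) => [//|/eqP wu].
    have wv : w != v by apply: contraTneq evw => ->; rewrite eirr.
    apply: contraLR isT => /norP[_ neuw].
    have : [set u; v; w] \in [set D | dissociation e D].
      apply: S; rewrite inE; apply/dissP => x y1 y2; rewrite !inE /e' /del_edge.
      move=> /orP[/orP[]|]/eqP-> /orP[/orP[]|]/eqP-> /orP[/orP[]|]/eqP->;
      rewrite ?eqxx ?(negbTE uv) ?(negbTE wv) ?(negbTE wu) ?(eq_sym v u) ?(eq_sym w v)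
        ?(negbTE uv) ?(negbTE wv) ?(eq_sym w u) ?(negbTE wu) ?eirr ?evw ?(negbTE neuw)
        ?(esym w v) ?(negbTE neuw) ?(esym w u) ?evw ?(negbTE neuw) ?andbF ?andFb //=.
    rewrite inE => /dissP H.
    have := H v u w; rewrite !inE !eqxx ?orbT esym euv evw => /(_ isT isT isT isT isT) /eqP.
    by rewrite eq_sym (negbTE wu).
- move=> N; apply/subsetP => D; rewrite !inE => /dissP H; apply/dissP.
  have Ny : forall y, ((y == u) || e u y) = ((y == v) || e v y).
    by move=> y; have := congr1 (fun S : {set T} => y \in S) N; rewrite !inE.
  have key : forall a b, ((a == u) && (b == v)) || ((a == v) && (b == u)) ->
      a \in D -> b \in D -> forall y, y \in D -> e a y -> y = b.
    move=> a b hab aD bD y yD eay; apply/eqP; apply: contraTT isT => yb.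
    have ya : y != a by apply: contraTneq eay => ->; rewrite eirr.
    have eby : e b y.
      move: (Ny y); case/orP: hab => /andP[/eqP ea /eqP eb]; subst a b;
      rewrite eay (negbTE ya) (negbTE yb) //= => [<-|->] //.
    have yu : (y == u) = false.
      by case/orP: hab => /andP[/eqP ea /eqP eb]; subst a b; rewrite ?(negbTE ya) ?(negbTE yb).
    have yv : (y == v) = false.
      by case/orP: hab => /andP[/eqP ea /eqP eb]; subst a b; rewrite ?(negbTE ya) ?(negbTE yb).
    have := H y a b yD aD bD; rewrite /e' /del_edge yu yv /= esym eay esym eby.
    have ab : a != b by case/orP: hab => /andP[/eqP ea /eqP eb]; subst a b; rewrite // eq_sym.
    by move=> /(_ isT isT) /eqP; rewrite (negbTE ab).
  move=> x y1 y2 xD y1D y2D e1 e2.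
  have [xu | xu] := eqVneq x u.
    subst x; case vD : (v \in D).
      rewrite (key u v _ xD vD y1 y1D e1) ?(key u v _ xD vD y2 y2D e2) //;
      by rewrite !eqxx.
    apply: (H u) => //; rewrite /e' /del_edge ?e1 ?e2 eqxx (negbTE uv) /= ?andbF ?orbF.
      by apply: contraFN vD => /eqP <-.
    by apply: contraFN vD => /eqP <-.
  have [xv | xv] := eqVneq x v.
    subst x; case uD : (u \in D).
      rewrite (key v u _ xD uD y1 y1D e1) ?(key v u _ xD uD y2 y2D e2) //;
      by rewrite !eqxx orbT.
    apply: (H v) => //; rewrite /e' /del_edge ?e1 ?e2 eqxx (negbTE xu) /=.
      by apply: contraFN uD => /eqP <-.
    by apply: contraFN uD => /eqP <-.
  by apply: (H x) => //; rewrite /e' /del_edge ?e1 ?e2 (negbTE xu) (negbTE xv).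
Qed.
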